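(* Let $(M,\omega_0)$, $\chi$, $\Gamma$, $f$ be as in the context, with the Standing Assumption in force, and let $\Gamma_n=\{\lambda\in\mathbb{R}^n:\lambda_i>0\ \forall i\}$. For every $C_0>0$ and every $x\in M$ the set $$\{\lambda'\in\Gamma:\ f(\lambda')\le C_0,\ \lambda'-\lambda[\chi](x)\in\Gamma_n\}$$ is bounded, and its diameter can be bounded, uniformly in $x\in M$, in terms of $f$, $C_0$, $\chi$ and the metric $g$.
   Context: $(M,\omega_0)$ is a compact complex manifold without boundary of complex dimension $n$ with Hermitian metric $\omega_0=\sqrt{-1}g_{i\bar j}dz_i\wedge d\bar z_j$. $\chi$ is a smooth real $(1,1)$-form; $\lambda[\chi](x)$ is the unordered $n$-tuple of eigenvalues of $g^{i\bar k}\chi_{j\bar k}$ at $x$. $\Gamma\subset\mathbb{R}^n$ is a closed convex permutation-symmetric cone containing $\Gamma_n$, contained in $\{\sum\lambda_i\ge0\}$ with $\mathrm{Int}\,\Gamma\subset\{\sum\lambda_i>0\}$; $f$ smooth symmetric on $\Gamma$. Standing Assumption: (i) $\partial f/\partial\lambda_i>0$, $f$ concave, $f>0$ in $\mathrm{Int}\,\Gamma$, $f=0$ on $\partial\Gamma$; (ii) $\lambda[\chi](x)\in\mathrm{Int}\,\Gamma$ for all $x$; (iii) $f$ positively homogeneous of degree 1 with $f(\lambda)\ge c_0(\prod\lambda_i)^{1/n}$ on $\Gamma_n$, some $c_0>0$. *)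

(* Defs.v *)
From HB Require Import structures.
From mathcomp Require Import all_boot all_order all_algebra all_fingroup.
From mathcomp Require Import all_classical all_reals all_analysis.
Set Implicit Arguments. Unset Strict Implicit. Unset Printing Implicit Defensive.
Import Order.TTheory GRing.Theory Num.Theory.
Import numFieldNormedType.Exports.
Local Open Scope classical_set_scope.
Local Open Scope ring_scope.

Definition Gamma_n (R : realType) (n : nat) : set 'rV[R]_n :=
  [set l | forall i : 'I_n, 0 < l ord0 i].

Definition perm_row (R : realType) (n : nat) (s : 'S_n) (l : 'rV[R]_n) : 'rV[R]_n :=
  \row_i l ord0 (s i).

(* the unordered n-tuple of coordinates (as a sequence) *)
Definition coords (R : realType) (n : nat) (l : 'rV[R]_n) : seq R :=
  [seq l ord0 i | i <- enum 'I_n].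

Definition evec (R : realType) (n : nat) (i : 'I_n) : 'rV[R]_n := delta_mx ord0 i.

Definition admissible_cone (R : realType) (n : nat) (G : set 'rV[R]_n) : Prop :=
  closed G
  /\ (forall a b t, G a -> G b -> 0 <= t -> t <= 1 -> G (t *: a + (1 - t) *: b))
  /\ (forall a t, G a -> 0 <= t -> G (t *: a))
  /\ (forall (s : 'S_n) a, G a -> G (perm_row s a))
  /\ (@Gamma_n R n `<=` G)
  /\ (forall a, G a -> 0 <= \sum_i a ord0 i)
  /\ (forall a, interior G a -> 0 < \sum_i a ord0 i).

(* Standing Assumption (i) and (iii) on f, plus "f symmetric on Gamma";
   smoothness is rendered as: continuous on Gamma, differentiable on Int Gamma. *)
Definition admissible_f (R : realType) (n : nat) (G : set 'rV[R]_n)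
    (f : 'rV[R]_n -> R) (c0 : R) : Prop :=
  {within G, continuous f}
  /\ (forall (s : 'S_n) a, G a -> f (perm_row s a) = f a)
  /\ (forall a, interior G a -> differentiable f a /\
          forall i : 'I_n, 0 < 'D_(@evec R n i) f a)
  /\ (forall a b t, G a -> G b -> 0 <= t -> t <= 1 ->
          t * f a + (1 - t) * f b <= f (t *: a + (1 - t) *: b))
  /\ (forall a, interior G a -> 0 < f a)
  /\ (forall a, G a -> ~ interior G a -> f a = 0)
  /\ (forall a t, G a -> 0 < t -> f (t *: a) = t * f a)
  /\ 0 < c0
  /\ (forall a, @Gamma_n R n a -> c0 * ((\prod_i a ord0 i) `^ (n%:R^-1)) <= f a).

(* Main.v *)
Require Import Defs.
From HB Require Import structures.
From mathcomp Require Import all_boot all_order all_algebra all_fingroup.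
From mathcomp Require Import all_classical all_reals all_analysis.
From mathcomp Require Import ring lra.
Import Order.TTheory GRing.Theory Num.Theory.
Import numFieldNormedType.Exports.
Local Open Scope classical_set_scope.
Local Open Scope ring_scope.

Lemma coords_perm (R : realType) n (l0 v : 'rV[R]_n) :
  perm_eq (coords l0) (coords v) -> exists p : 'S_n, forall i, l0 ord0 i = v ord0 (p i).
Proof.
have cE : forall l : 'rV[R]_n, coords l = val [tuple l ord0 i | i < n].
  by move=> l; rewrite /coords /= enumT unlock.
rewrite !cE => /tuple_permP [p Hp]; exists p => i.
have := congr1 (fun s => nth 0 s i) Hp.
rewrite -!cE /coords (nth_map i) ?size_enum_ord // nth_ord_enum => ->.
by rewrite (nth_map i) ?size_enum_ord // nth_ord_enum tnth_mktuple.
Qed.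
Lemma rV_ballP (R : realType) n (u v : 'rV[R]_n) e :
  0 < e -> (ball u e v <-> forall j, `|u ord0 j - v ord0 j| < e).
Proof.
move=> e0; split.
  by move=> [_ H] j; move: (H ord0 j); rewrite /ball /=.
move=> H; split => // i j; rewrite (ord1 i) /ball /=; exact: H.
Qed.

Lemma unif (R : realType) n (M : topologicalType) (lam : M -> 'rV[R]_n) (G : set 'rV[R]_n) :
  compact [set: M] -> continuous lam -> (forall x, interior G (lam x)) ->
  exists e : R, 0 < e /\ forall y, G (lam y - const_mx e) /\ forall j, `|lam y ord0 j| <= e^-1.
Proof.
move=> cM clam iG.
have H : \forall e \near (0:R)^'+, [set: M] `<=`
  (fun y => 0 < e /\ G (lam y - const_mx e) /\ forall j, `|lam y ord0 j| <= e^-1).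
  apply: (proj1 (compact_near_coveringP _) cM).
  move=> x _.
  have /nbhs_ballP [r /= r0 Hr] := iG x.
  exists (lam @^-1` ball (lam x) (r/2),
    [set e | 0 < e /\ e < r/2 /\ forall j, `|lam x ord0 j| + r <= e^-1]).
    split.
      by apply: clam; apply: nbhsx_ballx; rewrite divr_gt0.
    near=> e; split; first by near: e; exact: nbhs_right_gt.
    split; first by near: e; apply: nbhs_right_lt; rewrite divr_gt0.
    near: e; apply: (@filter_forall R _ _ ((0:R)^'+)) => j.
    have hp : 0 < `|lam x ord0 j| + r by rewrite ltr_wpDl.
    near=> e.
    have e0 : 0 < e by near: e; exact: nbhs_right_gt.
    have el : e < (`|lam x ord0 j| + r)^-1 by near: e; apply: nbhs_right_lt; rewrite invr_gt0.
    rewrite -(invrK (_ + r)) lef_pV2 ?posrE ?invr_gt0 //; exact: ltW.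
  move=> [y e] /= [Hy [e0 [er Hj]]]; split => //; split.
    apply: Hr; apply/rV_ballP => // j.
    move/rV_ballP: Hy => /(_ (divr_gt0 r0 (ltr0Sn _ 1)) j) Hy.
    rewrite !mxE (_ : _ - (_ - _) = (lam x ord0 j - lam y ord0 j) + e); last by ring.
    apply: (le_lt_trans (ler_normD _ _)); rewrite (gtr0_norm e0).
    by rewrite [r](splitr r) ltrD.
  move=> j; apply: le_trans (Hj j).
  move/rV_ballP: Hy => /(_ (divr_gt0 r0 (ltr0Sn _ 1)) j) Hy.
  have : `|lam y ord0 j| <= `|lam x ord0 j| + `|lam x ord0 j - lam y ord0 j|.
    have := ler_normB (lam x ord0 j) (lam x ord0 j - lam y ord0 j).
    by rewrite (_ : _ - (_ - _) = lam y ord0 j) //; ring.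
  move=> h; apply: (le_trans h); rewrite lerD2l; apply: ltW.
  apply: (lt_trans Hy); rewrite ltr_pdivrMr // ltr_pMr //.
  by rewrite ltr1n.
  have [e [e0 He]] := filter_ex (filterI (nbhs_right_gt (0:R)) H).
  by exists e; split => // y; have [_ ?] := He y I.
Unshelve. all: by end_near.
Qed.
Lemma pow_bound (R : realType) (n : nat) (p c0 C0 : R) : (0 < n)%N -> 0 < c0 -> 0 <= p ->
  c0 * p `^ (n%:R^-1) <= C0 -> p <= (C0 / c0) ^+ n.
Proof.
move=> n0 c0p p0 H.
have H1 : p `^ (n%:R^-1) <= C0 / c0 by rewrite ler_pdivlMr // mulrC.
have -> : p = (p `^ (n%:R^-1)) ^+ n.
  rewrite -powR_mulrn ?powR_ge0 // -powRrM mulVf ?powRr1 //.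
  by rewrite pnatr_eq0 -lt0n.
by apply: lerXn2r => //; rewrite nnegrE ?powR_ge0 //; apply: le_trans H1; exact: powR_ge0.
Qed.

Lemma prod_bound (R : realType) (n : nat) (d : 'rV[R]_n) (e : R) (i : 'I_n) :
  0 < e -> (forall j, e <= d ord0 j) -> e ^+ n.-1 * d ord0 i <= \prod_j d ord0 j.
Proof.
move=> e0 H.
rewrite (bigD1 i) //= mulrC ler_wpM2l //; first by apply: le_trans (H i); exact: ltW.
have -> : n.-1 = #|[pred j | j != i]|.
  by rewrite cardC1 card_ord.
rewrite -prodr_const; apply: ler_prod => j _; rewrite (ltW e0) /=; exact: H.
Qed.

Lemma f_ge0 (R : realType) n (G : set 'rV[R]_n) f c0 a :
  admissible_f G f c0 -> G a -> 0 <= f a.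
Proof.
move=> [_ [_ [_ [_ [fpos [fbd _]]]]]] Ga.
have [ia|nia] := pselect (interior G a); first exact: ltW (fpos _ ia).
by rewrite fbd.
Qed.

Lemma superadd (R : realType) n (G : set 'rV[R]_n) f c0 u v :
  admissible_cone G -> admissible_f G f c0 -> G u -> G v ->
  f u + f v <= f (u + v).
Proof.
move=> [_ [Gconv _]] [_ [_ [_ [fconc [_ [_ [fhom _]]]]]]] Gu Gv.
have h2 : (1 - 2^-1 : R) = 2^-1 by field.
have E : u + v = 2 *: (2^-1 *: u + (1 - 2^-1) *: v).
  by rewrite h2 -scalerDr scalerA mulfV ?scale1r // pnatr_eq0.
have h0 : (0:R) <= 2^-1 by lra.
have h1 : (2^-1:R) <= 1 by lra.


rewrite E fhom //; last exact: Gconv.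
have := fconc u v 2^-1 Gu Gv h0 h1; rewrite h2 => H.
rewrite -(ler_pM2l (_ : (0:R) < 2^-1)) ?invr_gt0 // mulrA mulVf ?mul1r ?pnatr_eq0 //.
by rewrite mulrDr.
Qed.

Theorem lemma3p5 (R : realType) (n : nat) (M : topologicalType)
    (lam : M -> 'rV[R]_n) (G : set 'rV[R]_n) (f : 'rV[R]_n -> R) (c0 : R) :
  compact [set: M] ->
  continuous lam ->
  admissible_cone G ->
  admissible_f G f c0 ->
  (forall x, interior G (lam x)) ->
  forall C0 : R, 0 < C0 ->
  exists D : R, forall (x : M) (l0 : 'rV[R]_n),
    perm_eq (coords l0) (coords (lam x)) ->
    forall a b : 'rV[R]_n,
      G a -> f a <= C0 -> @Gamma_n R n (a - l0) ->
      G b -> f b <= C0 -> @Gamma_n R n (b - l0) ->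
      forall i : 'I_n, `|a ord0 i - b ord0 i| <= D.
Proof.
move=> cM clam Gc fa ilam C0 C0p.
have [e [e0 He]] := @unif R n M lam G cM clam ilam.
have Gc' := Gc; have fa' := fa.
move: Gc' fa' => [_ [_ [_ [Gperm [GnG _]]]]] [_ [_ [_ [_ [_ [_ [_ [c0p fc0]]]]]]]].
pose Q := (C0 / c0) ^+ n / e ^+ n.-1.
exists (Q + 2 * e^-1) => x l0 Hp a b Ga fa_ Ha Gb fb_ Hb i.
have n0 : (0 < n)%N := leq_ltn_trans (leq0n _) (ltn_ord i).
have [p Hp'] := @coords_perm R n _ _ Hp.
have hl : `|l0 ord0 i| <= e^-1 by rewrite Hp'; exact: (He x).2.
have Gl : G (l0 - const_mx e).
  have -> : l0 - const_mx e = perm_row p (lam x - const_mx e).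
    by apply/rowP => j; rewrite !mxE Hp'.
  exact/Gperm/(He x).1.
have key : forall a, G a -> f a <= C0 -> Gamma_n (a - l0) ->
    - e^-1 < a ord0 i /\ a ord0 i <= Q + e^-1.
  move=> a' Ga' fa' Ha'; split.
    have := Ha' i; rewrite !mxE => H.
    move: hl; rewrite ler_norml => /andP [h1 h2]; lra.
  pose d := a' - l0 + const_mx e.
  have dj : forall j, e <= d ord0 j.
    by move=> j; have := Ha' j; rewrite !mxE => H; lra.
  have Gd : G d by apply: GnG => j; exact: lt_le_trans e0 (dj j).
  have Ea : a' = (l0 - const_mx e) + d by apply/rowP => j; rewrite !mxE; ring.
  have fd : f d <= C0.
    apply: le_trans fa'; rewrite [in X in _ <= X]Ea.
    apply: le_trans (@superadd R n G f c0 _ _ Gc fa Gl Gd); rewrite lerDr; exact: (@f_ge0 R n G f c0 _ fa Gl).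
  have pd : \prod_j d ord0 j <= (C0 / c0) ^+ n.
    apply: (@pow_bound R n _ c0 C0 n0 c0p).
      by apply: prodr_ge0 => j _; apply: le_trans (dj j); exact: ltW.
    apply: le_trans fd; apply: fc0 => j; exact: lt_le_trans e0 (dj j).
  have di : d ord0 i <= Q.
    rewrite /Q ler_pdivlMr ?exprn_gt0 // mulrC.
    exact: le_trans (@prod_bound R n d e i e0 dj) pd.
  move: di; rewrite /d !mxE => H; move: hl; rewrite ler_norml => /andP [h1 h2]; lra.
have [ka1 ka2] := key a Ga fa_ Ha.
have [kb1 kb2] := key b Gb fb_ Hb.
rewrite ler_norml; apply/andP; split; lra.
Qed.
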